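(* There is a constant $C$ and infinitely many pairwise non-isomorphic finite graphs $G$ with $L(G)\ge T(D(G)-6)-C$.
   Context: The tower function is $T(0)=1$, $T(i)=2^{T(i-1)}$. Graphs are simple undirected graphs viewed as structures for the first-order language with adjacency symbol $\sim$ and equality. A sentence defines a finite graph $G$ if it is true on $G$ and false on every graph (of any cardinality) not isomorphic to $G$. $D(G)$ is the minimum quantifier rank of a sentence defining $G$, and $L(G)$ is the minimum length of a sentence defining $G$, length being the number of symbols with each variable and each relation symbol counted as a single symbol. *)

(* Defs.v *)
From Stdlib Require Import Arith Lia.

Record graph := Graph {
  V : Type;
  adj : V -> V -> Prop;
  adj_sym : forall x y, adj x y -> adj y x;
  adj_irrefl : forall x, ~ adj x x;
  V_inhabited : inhabited V
}.

Definition finite_graph (G : graph) : Prop :=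
  exists l : list (V G), forall v, List.In v l.

Definition iso (G H : graph) : Prop :=
  exists (f : V G -> V H) (g : V H -> V G),
    (forall x, g (f x) = x) /\ (forall y, f (g y) = y) /\
    (forall x y, adj G x y <-> adj H (f x) (f y)).

Inductive form :=
| FAdj : nat -> nat -> form
| FEq  : nat -> nat -> form
| FNot : form -> form
| FAnd : form -> form -> form
| FOr  : form -> form -> form
| FImp : form -> form -> form
| FIff : form -> form -> form
| FEx  : nat -> form -> form
| FAll : nat -> form -> form.

Fixpoint free (x : nat) (f : form) : Prop :=
  match f with
  | FAdj y z | FEq y z => x = y \/ x = z
  | FNot g => free x g
  | FAnd g h | FOr g h | FImp g h | FIff g h => free x g \/ free x h
  | FEx y g | FAll y g => x <> y /\ free x g
  end.

Definition sentence (f : form) : Prop := forall x, ~ free x f.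

Definition upd {T : Type} (e : nat -> T) (x : nat) (v : T) : nat -> T :=
  fun y => if Nat.eqb y x then v else e y.

Fixpoint sat (G : graph) (e : nat -> V G) (f : form) : Prop :=
  match f with
  | FAdj x y => adj G (e x) (e y)
  | FEq x y => e x = e y
  | FNot g => ~ sat G e g
  | FAnd g h => sat G e g /\ sat G e h
  | FOr g h => sat G e g \/ sat G e h
  | FImp g h => sat G e g -> sat G e h
  | FIff g h => sat G e g <-> sat G e h
  | FEx x g => exists v, sat G (upd e x v) g
  | FAll x g => forall v, sat G (upd e x v) g
  end.

Definition models (G : graph) (f : form) : Prop := forall e, sat G e f.

Fixpoint qrank (f : form) : nat :=
  match f with
  | FAdj _ _ | FEq _ _ => 0
  | FNot g => qrank g
  | FAnd g h | FOr g h | FImp g h | FIff g h => Nat.max (qrank g) (qrank h)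
  | FEx _ g | FAll _ g => S (qrank g)
  end.

(* Number of symbols in the standard written form:
   x ~ y and x = y : 3 symbols; ~g : 1 + |g|;
   (g * h) for a binary connective * : 3 + |g| + |h| (two parentheses and
   the connective); Qx g : 2 + |g|. *)
Fixpoint flength (f : form) : nat :=
  match f with
  | FAdj _ _ | FEq _ _ => 3
  | FNot g => 1 + flength g
  | FAnd g h | FOr g h | FImp g h | FIff g h => 3 + flength g + flength h
  | FEx _ g | FAll _ g => 2 + flength g
  end.

Definition defines (f : form) (G : graph) : Prop :=
  sentence f /\ models G f /\
  forall H : graph, ~ iso H G -> ~ models H f.

Definition is_D (G : graph) (d : nat) : Prop :=
  (exists f, defines f G /\ qrank f = d) /\
  (forall f, defines f G -> d <= qrank f).

Fixpoint tower (i : nat) : nat :=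
  match i with
  | 0 => 1
  | S j => 2 ^ tower j
  end.

(* Main.v *)
Require Import Defs.
From Stdlib Require Import Arith Lia List Classical ClassicalEpsilon FunctionalExtensionality Eqdep_dec Cantor.
Import ListNotations.

Fixpoint bigOr (x : nat) (l : list form) : form :=
  match l with [] => FNot (FEq x x) | f :: r => FOr f (bigOr x r) end.
Fixpoint bigAnd (x : nat) (l : list form) : form :=
  match l with [] => FEq x x | f :: r => FAnd f (bigAnd x r) end.

Lemma sat_bigOr G e x l : sat G e (bigOr x l) <-> exists f, In f l /\ sat G e f.
Proof.
  induction l as [|f r IH]; simpl.
  - split; [intro H; exfalso; apply H; reflexivity| intros [f [[] _]]].
  - rewrite IH. split.
    + intros [H|[g [Hg H]]]; eauto.
    + intros [g [[<-|Hg] H]]; eauto.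
Qed.

Lemma sat_bigAnd G e x l : sat G e (bigAnd x l) <-> forall f, In f l -> sat G e f.
Proof.
  induction l as [|f r IH]; simpl.
  - split; [intros _ f []| reflexivity].
  - rewrite IH. split.
    + intros [H1 H2] g [<-|Hg]; auto.
    + intros H; split; auto.
Qed.

Lemma free_bigOr v x l : free v (bigOr x l) -> v = x \/ exists f, In f l /\ free v f.
Proof.
  induction l as [|f r IH]; simpl.
  - intros [H|H]; auto.
  - intros [H|H]; [right; eauto|]. destruct (IH H) as [H'|[g [Hg Hf]]]; eauto.
Qed.

Lemma free_bigAnd v x l : free v (bigAnd x l) -> v = x \/ exists f, In f l /\ free v f.
Proof.
  induction l as [|f r IH]; simpl.
  - intros [H|H]; auto.
  - intros [H|H]; [right; eauto|]. destruct (IH H) as [H'|[g [Hg Hf]]]; eauto.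
Qed.

Lemma qrank_bigOr x l r : (forall f, In f l -> qrank f <= r) -> qrank (bigOr x l) <= r.
Proof.
  induction l as [|f l IH]; simpl; intros H; [lia|].
  apply Nat.max_lub; auto.
Qed.

Lemma qrank_bigAnd x l r : (forall f, In f l -> qrank f <= r) -> qrank (bigAnd x l) <= r.
Proof.
  induction l as [|f l IH]; simpl; intros H; [lia|].
  apply Nat.max_lub; auto.
Qed.

Lemma testbit_le n m : Nat.testbit n m = true -> 2 ^ m <= n.
Proof.
  intros H. rewrite Nat.testbit_true in H.
  destruct (Nat.lt_ge_cases n (2^m)) as [Hl|Hl]; auto.
  rewrite Nat.div_small in H by lia. discriminate.
Qed.

Lemma testbit_lt n m : Nat.testbit n m = true -> m < n.
Proof.
  intros H. apply testbit_le in H. pose proof (Nat.pow_gt_lin_r 2 m). lia.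
Qed.

Lemma testbit_small n m j : n < 2 ^ j -> Nat.testbit n m = true -> m < j.
Proof.
  intros Hn H. apply testbit_le in H.
  destruct (Nat.lt_ge_cases m j); auto.
  pose proof (Nat.pow_le_mono_r 2 j m). lia.
Qed.

Definition elems (n : nat) : list nat := filter (fun m => Nat.testbit n m) (seq 0 n).

Lemma in_elems n m : In m (elems n) <-> Nat.testbit n m = true.
Proof.
  unfold elems. rewrite filter_In, in_seq. split; [tauto|].
  intros H; pose proof (testbit_lt _ _ H); split; auto; lia.
Qed.

Fixpoint phi (fu n x p : nat) : form :=
  match fu with
  | 0 => FEq x x
  | S f => let y := S (x + p) in
    FAnd (FAll y (FImp (FAnd (FAdj x y) (FNot (FEq y p)))
                       (bigOr y (map (fun m => phi f m y x) (elems n)))))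
         (bigAnd x (map (fun m => FEx y (FAnd (FAnd (FAdj x y) (FNot (FEq y p))) (phi f m y x)))
                        (elems n)))
  end.

Fixpoint PhiF (G : graph) (fu n : nat) (a b : V G) : Prop :=
  match fu with
  | 0 => True
  | S f =>
    (forall c, adj G a c -> c <> b -> exists m, In m (elems n) /\ PhiF G f m c a) /\
    (forall m, In m (elems n) -> exists c, adj G a c /\ c <> b /\ PhiF G f m c a)
  end.

Lemma upd_eq {T} (e : nat -> T) x v : upd e x v x = v.
Proof. unfold upd. now rewrite Nat.eqb_refl. Qed.
Lemma upd_neq {T} (e : nat -> T) x y v : y <> x -> upd e x v y = e y.
Proof. intros H. unfold upd. destruct (Nat.eqb_spec y x); congruence. Qed.

Lemma phi_sat G fu : forall n x p e, sat G e (phi fu n x p) <-> PhiF G fu n (e x) (e p).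
Proof.
  induction fu as [|f IH]; intros n x p e; simpl; [tauto|].
  rewrite sat_bigAnd.
  split.
  - intros [H1 H2]. split.
    + intros c Hc Hcb. specialize (H1 c). simpl in H1.
      rewrite upd_eq, (upd_neq e (S (x+p)) x c) , (upd_neq e (S (x+p)) p c) in H1 by lia.
      pose proof (H1 (conj Hc Hcb)) as Hs.
      apply sat_bigOr in Hs.
      destruct Hs as [g' [Hg' Hs]]. apply in_map_iff in Hg'. destruct Hg' as [m [<- Hm]].
      exists m. split; auto. apply IH in Hs.
      rewrite upd_eq, upd_neq in Hs by lia. auto.
    + intros m Hm. specialize (H2 _ (in_map _ _ _ Hm)). simpl in H2.
      destruct H2 as [c [[Hc Hcb] Hs]]. exists c.
      rewrite upd_eq, (upd_neq e (S (x+p)) x c) in Hc by lia. rewrite upd_eq, (upd_neq e (S (x+p)) p c) in Hcb by lia.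
      apply IH in Hs. rewrite upd_eq, upd_neq in Hs by lia. auto.
  - intros [H1 H2]. split.
    + intros c. simpl.
      rewrite upd_eq, (upd_neq e (S (x+p)) x c) , (upd_neq e (S (x+p)) p c) by lia.
      intros [Hc Hcb]. destruct (H1 c Hc Hcb) as [m [Hm Hs]].
      apply sat_bigOr. exists (phi f m (S (x+p)) x). split; [apply (in_map (fun m => phi f m (S (x+p)) x)); auto|].
      apply IH. rewrite upd_eq, upd_neq by lia. auto.
    + intros g Hg. apply in_map_iff in Hg. destruct Hg as [m [<- Hm]].
      destruct (H2 m Hm) as [c [Hc [Hcb Hs]]]. simpl. exists c.
      rewrite upd_eq, (upd_neq e (S (x+p)) x c) , (upd_neq e (S (x+p)) p c) by lia.
      split; auto. apply IH. rewrite upd_eq, upd_neq by lia. auto.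
Qed.

Lemma PhiF_fuel G : forall fu fu' n a b, n < fu -> n < fu' -> (PhiF G fu n a b <-> PhiF G fu' n a b).
Proof.
  induction fu as [|f IH]; intros fu' n a b H1 H2; [lia|].
  destruct fu' as [|f']; [lia|]. simpl.
  assert (HE : forall m c d, In m (elems n) -> (PhiF G f m c d <-> PhiF G f' m c d)).
  { intros m c d Hm. apply in_elems, testbit_lt in Hm. apply IH; lia. }
  split; intros [A B]; split.
  - intros c Hc Hcb. destruct (A c Hc Hcb) as [m [Hm Hs]]. exists m. split; auto. apply HE; auto.
  - intros m Hm. destruct (B m Hm) as [c [? [? Hs]]]. exists c. repeat split; auto. apply HE; auto.
  - intros c Hc Hcb. destruct (A c Hc Hcb) as [m [Hm Hs]]. exists m. split; auto. apply HE; auto.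
  - intros m Hm. destruct (B m Hm) as [c [? [? Hs]]]. exists c. repeat split; auto. apply HE; auto.
Qed.

Definition Phi G n a b := PhiF G (S n) n a b.

Lemma Phi_unfold G n a b : Phi G n a b <->
  ((forall c, adj G a c -> c <> b -> exists m, Nat.testbit n m = true /\ Phi G m c a) /\
   (forall m, Nat.testbit n m = true -> exists c, adj G a c /\ c <> b /\ Phi G m c a)).
Proof.
  unfold Phi at 1. simpl.
  assert (HE : forall m c d, In m (elems n) -> (PhiF G n m c d <-> Phi G m c d)).
  { intros m c d Hm. apply in_elems, testbit_lt in Hm. apply PhiF_fuel; lia. }
  split; intros [A B]; split.
  - intros c Hc Hcb. destruct (A c Hc Hcb) as [m [Hm Hs]]. exists m. split; [apply in_elems; auto|]. exact (proj1 (HE m c a Hm) Hs).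
  - intros m Hm. apply in_elems in Hm. destruct (B m Hm) as [c [? [? Hs]]]. exists c. split; [auto|split; [auto|]]. exact (proj1 (HE m c a Hm) Hs).
  - intros c Hc Hcb. destruct (A c Hc Hcb) as [m [Hm Hs]]. exists m. pose proof Hm as Hm'. apply in_elems in Hm'.
    split; [exact Hm'|]. apply (proj2 (HE m c a Hm')). exact Hs.
  - intros m Hm. pose proof Hm as Hm'. apply in_elems in Hm'. destruct (B m Hm') as [c [? [? Hs]]].
    exists c. split; [auto|split; [auto|]]. apply (proj2 (HE m c a Hm)). exact Hs.
Qed.

Lemma phi_sat' G n x p e : sat G e (phi (S n) n x p) <-> Phi G n (e x) (e p).
Proof. apply phi_sat. Qed.

Lemma Phi_uniq G : forall t t' a b, Phi G t a b -> Phi G t' a b -> t = t'.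
Proof.
  intro t. induction t as [t IH] using (well_founded_induction lt_wf).
  intros t' a b H1 H2.
  apply Phi_unfold in H1, H2. destruct H1 as [A1 B1]. destruct H2 as [A2 B2].
  apply Nat.bits_inj. intro m.
  destruct (Nat.testbit t m) eqn:E1; destruct (Nat.testbit t' m) eqn:E2; auto.
  - exfalso. destruct (B1 m E1) as [c [Hc [Hcb Hs]]].
    destruct (A2 c Hc Hcb) as [m' [Hm' Hs']].
    assert (m = m') by (eapply IH; [apply testbit_lt; eauto | eauto | eauto]). subst. congruence.
  - exfalso. destruct (B2 m E2) as [c [Hc [Hcb Hs]]].
    destruct (A1 c Hc Hcb) as [m' [Hm' Hs']].
    assert (m' = m) by (eapply IH; [apply testbit_lt; eauto | eauto | eauto]). subst. congruence.
Qed.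

Definition SemSigma (H : graph) (T S : nat) : Prop :=
 (exists r, Phi H S r r) /\
 (forall x y, Phi H S x x -> Phi H S y y -> x = y) /\
 (forall x, Phi H S x x \/ exists p, adj H x p /\ exists t, t < T /\ Phi H t x p) /\
 (forall x p, adj H x p -> (exists t, t < T /\ Phi H t x p) -> (exists u, u < T /\ Phi H u p x) -> False) /\
 (forall x y z, adj H x y -> adj H x z -> y <> z -> forall t, t < T -> Phi H t y x -> Phi H t z x -> False).

Definition top (S : nat) (l : list nat) : nat := match l with [] => S | m :: _ => m end.
Fixpoint valid (S : nat) (l : list nat) : bool :=
  match l with [] => true | m :: l' => Nat.testbit (top S l') m && valid S l' end.

Lemma valid_cons S m l : valid S (m :: l) = true <-> Nat.testbit (top S l) m = true /\ valid S l = true.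
Proof. simpl. apply Bool.andb_true_iff. Qed.

Lemma valid_lt T S (hST : forall m, Nat.testbit S m = true -> m < T) :
  forall l m, valid S (m :: l) = true -> m < T.
Proof.
  induction l as [|m' l IH]; intros m Hv; apply valid_cons in Hv; destruct Hv as [Hb Hv]; simpl in Hb.
  - auto.
  - apply testbit_lt in Hb. specialize (IH m' Hv). lia.
Qed.

Fixpoint F2 (H : graph) (S : nat) (r : V H) (l : list nat) : V H * V H :=
  match l with
  | [] => (r, r)
  | m :: l' => let (a, b) := F2 H S r l' in
      (epsilon (inhabits r) (fun c => adj H a c /\ c <> b /\ Phi H m c a), a)
  end.

Definition Fv H S r l := fst (F2 H S r l).
Definition Pv H S r l := snd (F2 H S r l).

Lemma F2_cons H S r m l : F2 H S r (m :: l) =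
  (epsilon (inhabits r) (fun c => adj H (Fv H S r l) c /\ c <> Pv H S r l /\ Phi H m c (Fv H S r l)), Fv H S r l).
Proof. simpl. unfold Fv, Pv. destruct (F2 H S r l); reflexivity. Qed.

Lemma F_inv H S r (Hr : Phi H S r r) : forall l, valid S l = true ->
  Phi H (top S l) (Fv H S r l) (Pv H S r l) /\
  (forall m l', l = m :: l' -> adj H (Fv H S r l') (Fv H S r l) /\ Fv H S r l <> Pv H S r l' /\
       Pv H S r l = Fv H S r l').
Proof.
  induction l as [|m l IH]; intros Hv.
  - split; [exact Hr|]. intros m l' E; discriminate.
  - apply valid_cons in Hv. destruct Hv as [Hb Hv]. destruct (IH Hv) as [HP _].
    apply Phi_unfold in HP. destruct HP as [_ HP]. destruct (HP m Hb) as [c Hc].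
    assert (Hs := epsilon_spec (inhabits r) (fun c => adj H (Fv H S r l) c /\ c <> Pv H S r l /\ Phi H m c (Fv H S r l)) (ex_intro _ c Hc)).
    assert (E1 : Fv H S r (m::l) = epsilon (inhabits r) (fun c => adj H (Fv H S r l) c /\ c <> Pv H S r l /\ Phi H m c (Fv H S r l))) by (unfold Fv at 1; rewrite F2_cons; reflexivity).
    assert (E2 : Pv H S r (m::l) = Fv H S r l) by (unfold Pv; rewrite F2_cons; reflexivity).
    rewrite E1, E2. simpl in Hs. simpl top. split; [tauto|].
    intros m' l' E. injection E as <- <-. tauto.
Qed.

Lemma typed_not_root H T S (HS : SemSigma H T S) (hST : forall m, Nat.testbit S m = true -> m < T)
  x p t : Phi H S x x -> adj H x p -> Phi H t x p -> t < T -> False.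
Proof.
  intros Hx Hxp Ht HtT. destruct HS as [_ [_ [_ [HD _]]]].
  pose proof Hx as Hx'. apply Phi_unfold in Hx'. destruct Hx' as [A _].
  assert (p <> x) by (intro E; subst; apply (adj_irrefl H x); auto).
  destruct (A p Hxp H0) as [u [Hu Hup]].
  apply (HD x p Hxp); eauto.
Qed.

Lemma parent_uniq H T S (HS : SemSigma H T S) x p p' t t' :
  adj H x p -> Phi H t x p -> t < T -> adj H x p' -> Phi H t' x p' -> t' < T -> p = p'.
Proof.
  intros H1 H2 H3 H4 H5 H6. destruct (classic (p = p')) as [|Hne]; auto. exfalso.
  destruct HS as [_ [_ [_ [HD _]]]].
  pose proof H2 as H2'. apply Phi_unfold in H2'. destruct H2' as [A _].
  destruct (A p' H4 (not_eq_sym Hne)) as [u [Hu Hup]].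
  apply testbit_lt in Hu.
  apply (HD x p' H4); eauto. exists u; split; auto; lia.
Qed.

Lemma F_nil H S r : Fv H S r [] = r.
Proof. reflexivity. Qed.
Lemma P_nil H S r : Pv H S r [] = r.
Proof. reflexivity. Qed.

Lemma F_cons_props H T S (hST : forall m, Nat.testbit S m = true -> m < T) r (Hr : Phi H S r r) m l :
  valid S (m :: l) = true ->
  adj H (Fv H S r l) (Fv H S r (m::l)) /\ Phi H m (Fv H S r (m::l)) (Fv H S r l) /\ m < T /\
  Pv H S r (m :: l) = Fv H S r l /\ Fv H S r (m::l) <> Pv H S r l.
Proof.
  intros Hv. destruct (F_inv H S r Hr _ Hv) as [HP HQ]. destruct (HQ m l eq_refl) as [Q1 [Q2 Q3]].
  simpl top in HP. rewrite Q3 in HP. split; [auto|split; [exact HP|split; [eapply valid_lt; eauto|split; auto]]].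
Qed.

Lemma F_not_root H T S (HS : SemSigma H T S) (hST : forall m, Nat.testbit S m = true -> m < T) r (Hr : Phi H S r r) m l :
  valid S (m :: l) = true -> Fv H S r (m :: l) <> r.
Proof.
  intros Hv E. destruct (F_cons_props H T S hST r Hr m l Hv) as [Q1 [Q2 [Q3 _]]].
  rewrite E in Q1, Q2. apply (typed_not_root H T S HS hST r (Fv H S r l) m Hr); auto.
  apply adj_sym; auto.
Qed.

Lemma F_inj H T S (HS : SemSigma H T S) (hST : forall m, Nat.testbit S m = true -> m < T) r (Hr : Phi H S r r) :
  forall l1 l2, valid S l1 = true -> valid S l2 = true -> Fv H S r l1 = Fv H S r l2 -> l1 = l2.
Proof.
  induction l1 as [|m1 l1 IH]; intros [|m2 l2] V1 V2 E; auto.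
  - exfalso. symmetry in E. eapply F_not_root; eauto.
  - exfalso. eapply F_not_root; eauto.
  - destruct (F_cons_props H T S hST r Hr m1 l1 V1) as [A1 [B1 [C1 _]]].
    destruct (F_cons_props H T S hST r Hr m2 l2 V2) as [A2 [B2 [C2 _]]].
    rewrite E in A1, B1.
    assert (Ep : Fv H S r l1 = Fv H S r l2).
    { eapply (parent_uniq H T S HS); eauto using adj_sym. }
    apply valid_cons in V1, V2.
    assert (l1 = l2) by (apply IH; tauto). subst.
    rewrite (Phi_uniq H m1 m2 _ _ B1 B2). reflexivity.
Qed.

Lemma F_nbr H T S (HS : SemSigma H T S) (hST : forall m, Nat.testbit S m = true -> m < T) r (Hr : Phi H S r r) :
  forall l y, valid S l = true -> adj H (Fv H S r l) y ->
  exists l2, valid S l2 = true /\ Fv H S r l2 = y /\ ((exists m, l = m :: l2) \/ (exists m, l2 = m :: l)).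
Proof.
  intros l y Hv Hy.
  destruct (F_inv H S r Hr l Hv) as [HP _].
  destruct (classic (y = Pv H S r l /\ l <> [])) as [[Ey Hl]|Hne].
  - destruct l as [|m l']; [congruence|].
    destruct (F_cons_props H T S hST r Hr m l' Hv) as [_ [_ [_ [Q _]]]].
    exists l'. apply valid_cons in Hv. split; [tauto|]. split; [congruence|]. left; eauto.
  - assert (Hyp : y <> Pv H S r l).
    { intro Ey. destruct l as [|m l'].
      - rewrite P_nil in Ey. rewrite F_nil in Hy. subst. apply (adj_irrefl H r); auto.
      - apply Hne; split; auto; discriminate. }
    pose proof HP as HP'. apply Phi_unfold in HP'. destruct HP' as [A _].
    destruct (A y Hy Hyp) as [u [Hu Hyu]].
    assert (Hv2 : valid S (u :: l) = true) by (apply valid_cons; auto).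
    destruct (F_cons_props H T S hST r Hr u l Hv2) as [A2 [B2 [C2 [D2 E2]]]].
    exists (u :: l). split; auto. split; [|right; eauto].
    destruct (classic (Fv H S r (u :: l) = y)) as [|Hne2]; auto. exfalso.
    destruct HS as [_ [_ [_ [_ HE]]]].
    apply (HE (Fv H S r l) y (Fv H S r (u :: l)) Hy A2 (not_eq_sym Hne2) u C2 Hyu B2).
Qed.

Lemma F_surj H T S (HS : SemSigma H T S) (hST : forall m, Nat.testbit S m = true -> m < T) r (Hr : Phi H S r r) :
  forall y, exists l, valid S l = true /\ Fv H S r l = y.
Proof.
  assert (Q : forall n t y p, T - t = n -> adj H y p -> Phi H t y p -> t < T -> exists l, valid S l = true /\ Fv H S r l = y).
  { intro n. induction n as [n IH] using (well_founded_induction lt_wf).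
    intros t y p En Hyp Ht HtT.
    pose proof HS as HS'. destruct HS' as [_ [HB [HC [HD _]]]].
    destruct (HC p) as [Hroot | [q [Hpq [t' [Ht'T Ht']]]]].
    - assert (p = r) by (apply HB; auto). subst p.
      destruct (F_nbr H T S HS hST r Hr [] y eq_refl (adj_sym _ _ _ Hyp)) as [l [Hl [Hl2 _]]]. eauto.
    - assert (Hqy : q <> y).
      { intro E; subst q. apply (HD p y Hpq); eauto. }
      pose proof Ht' as Ht''. apply Phi_unfold in Ht''. destruct Ht'' as [A _].
      destruct (A y (adj_sym _ _ _ Hyp) (not_eq_sym Hqy)) as [u [Hu Hyu]].
      rewrite (Phi_uniq H u t _ _ Hyu Ht) in Hu.
      apply testbit_lt in Hu.
      destruct (IH (T - t') ltac:(lia) t' p q eq_refl Hpq Ht' Ht'T) as [l [Hl El]].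
      subst p.
      destruct (F_nbr H T S HS hST r Hr l y Hl (adj_sym _ _ _ Hyp)) as [l2 [Hl2 [E2 _]]]. eauto. }
  intro y. pose proof HS as HS'. destruct HS' as [_ [HB [HC _]]].
  destruct (HC y) as [Hroot | [p [Hyp [t [HtT Ht]]]]].
  - exists []. split; auto.
  - eapply Q; eauto.
Qed.

Definition VG (S : nat) := {l : list nat | valid S l = true}.
Definition adjG (S : nat) (a b : VG S) : Prop :=
  (exists m, proj1_sig a = m :: proj1_sig b) \/ (exists m, proj1_sig b = m :: proj1_sig a).

Lemma adjG_sym S a b : adjG S a b -> adjG S b a.
Proof. unfold adjG; tauto. Qed.

Lemma adjG_irrefl S a : ~ adjG S a a.
Proof.
  unfold adjG. intros [[m E]|[m E]]; apply (f_equal (@length nat)) in E; simpl in E; lia.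
Qed.

Definition vroot (S : nat) : VG S := exist _ [] eq_refl.

Definition Gr (S : nat) : graph :=
  Graph (VG S) (adjG S) (adjG_sym S) (adjG_irrefl S) (inhabits (vroot S)).

Lemma VG_eq S (a b : VG S) : proj1_sig a = proj1_sig b -> a = b.
Proof.
  destruct a as [a Ha], b as [b Hb]. simpl. intros <-. f_equal. apply UIP_dec. decide equality.
Qed.

Lemma model_iso H T S (HS : SemSigma H T S) (hST : forall m, Nat.testbit S m = true -> m < T) :
  iso H (Gr S).
Proof.
  pose proof HS as HS'. destruct HS' as [[r Hr] _].
  assert (Hsurj : forall y, exists v : VG S, Fv H S r (proj1_sig v) = y).
  { intro y. destruct (F_surj H T S HS hST r Hr y) as [l [Hl E]]. exists (exist _ l Hl). auto. }
  set (f := fun y => proj1_sig (constructive_indefinite_description _ (Hsurj y))).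
  assert (Hf : forall y, Fv H S r (proj1_sig (f y)) = y).
  { intro y. unfold f. destruct (constructive_indefinite_description _ (Hsurj y)). auto. }
  exists f, (fun v : VG S => Fv H S r (proj1_sig v)).
  assert (Hinj : forall v w : VG S, Fv H S r (proj1_sig v) = Fv H S r (proj1_sig w) -> v = w).
  { intros [v Hv] [w Hw] E. apply VG_eq. simpl in *. eapply F_inj; eauto. }
  split; [exact Hf|]. split.
  - intro v. apply Hinj. apply Hf.
  - intros x y. simpl. split.
    + intro Hxy. rewrite <- (Hf x), <- (Hf y) in Hxy.
      destruct (f x) as [l1 H1], (f y) as [l2 H2]. simpl in Hxy.
      destruct (F_nbr H T S HS hST r Hr l1 _ H1 Hxy) as [l3 [H3 [E3 Hc]]].
      assert (l3 = l2) by (eapply F_inj; eauto). subst l3.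
      unfold adjG; simpl. destruct Hc; [left|right]; auto.
    + intro Hxy. rewrite <- (Hf x), <- (Hf y).
      destruct (f x) as [l1 H1], (f y) as [l2 H2]. unfold adjG in Hxy; simpl in *.
      destruct Hxy as [[m E]|[m E]]; subst.
      * apply adj_sym. apply (F_cons_props H T S hST r Hr m l2 H1).
      * apply (F_cons_props H T S hST r Hr m l1 H2).
Qed.

Lemma G_Phi S : forall n (x p : VG S), top S (proj1_sig x) = n ->
  ((proj1_sig x = [] /\ p = x) \/ exists m, proj1_sig x = m :: proj1_sig p) -> Phi (Gr S) n x p.
Proof.
  intro n. induction n as [n IH] using (well_founded_induction lt_wf).
  intros x p Hn Hxp. apply Phi_unfold. split.
  - intros c Hc Hcp. simpl in Hc. unfold adjG in Hc.
    destruct Hc as [[u E]|[u E]].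
    + exfalso. destruct Hxp as [[E1 E2]|[m E1]].
      * rewrite E1 in E. discriminate.
      * rewrite E1 in E. injection E as _ E. apply Hcp. apply VG_eq. auto.
    + exists u. destruct c as [lc Hc]. simpl in E. subst lc.
      pose proof Hc as Hc'. apply valid_cons in Hc'. destruct Hc' as [Hb _].
      rewrite Hn in Hb. split; auto. apply IH; [apply testbit_lt; auto| simpl; auto |].
      right. exists u. reflexivity.
  - intros u Hu. destruct x as [lx Hx]. simpl in Hn.
    assert (Hv : valid S (u :: lx) = true) by (apply valid_cons; rewrite Hn; auto).
    exists (exist _ (u :: lx) Hv). split; [|split].
    + simpl. unfold adjG. right. exists u. reflexivity.
    + intro E. subst p. simpl in Hxp. destruct Hxp as [[E1 E2]|[m E1]].
      * apply (f_equal (@proj1_sig _ _)) in E2. simpl in E2. apply (f_equal (@length nat)) in E2. simpl in E2. lia.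
      * apply (f_equal (@length nat)) in E1. simpl in E1. lia.
    + apply IH; [apply testbit_lt; auto| reflexivity|]. right. exists u. reflexivity.
Qed.

Lemma G_Phi_child S (x p : VG S) m : proj1_sig x = m :: proj1_sig p -> Phi (Gr S) m x p.
Proof. intros E. apply G_Phi; [rewrite E; reflexivity| right; eauto]. Qed.

Lemma G_Phi_root S : Phi (Gr S) S (vroot S) (vroot S).
Proof. apply G_Phi; [reflexivity| left; auto]. Qed.

Lemma G_rev S T a b (hab : a <> b) (Ha : Nat.testbit S a = true) (Hb : Nat.testbit S b = true)
  (HaT : T <= 2 ^ a) (HbT : T <= 2 ^ b) :
  forall lp (p x : VG S) m, proj1_sig p = lp -> proj1_sig x = m :: lp -> forall t, Phi (Gr S) t p x -> T <= t.
Proof.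
  induction lp as [|m' lq IH]; intros p x m Ep Ex t Ht; apply Phi_unfold in Ht; destruct Ht as [A _].
  - assert (exists w, w <> m /\ Nat.testbit S w = true /\ T <= 2 ^ w) as [w [Hwm [Hw HwT]]].
    { destruct (Nat.eq_dec a m); [exists b | exists a]; repeat split; auto; congruence. }
    assert (Hv : valid S [w] = true) by (simpl; rewrite Hw; reflexivity).
    set (c := exist (fun l => valid S l = true) [w] Hv : VG S).
    assert (Hpc : adjG S p c) by (right; exists w; simpl; rewrite Ep; reflexivity).
    assert (Hcx : c <> x) by (intro E; subst x; simpl in Ex; congruence).
    destruct (A c Hpc Hcx) as [u [Hu Hcu]].
    assert (Hcw : Phi (Gr S) w c p) by (apply G_Phi_child; simpl; rewrite Ep; reflexivity).
    rewrite (Phi_uniq _ _ _ _ _ Hcu Hcw) in Hu. apply testbit_le in Hu. lia.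
  - destruct p as [lp' Hp]. simpl in Ep. subst lp'.
    pose proof Hp as Hq. apply valid_cons in Hq. destruct Hq as [_ Hq].
    set (q := exist (fun l => valid S l = true) lq Hq : VG S).
    assert (Hpq : adjG S (exist _ (m' :: lq) Hp) q) by (left; exists m'; reflexivity).
    assert (Hqx : q <> x) by (intro E; subst x; simpl in Ex; apply (f_equal (@length nat)) in Ex; simpl in Ex; lia).
    destruct (A q Hpq Hqx) as [u [Hu Hqu]].
    assert (T <= u) by (eapply (IH q (exist _ (m' :: lq) Hp) m'); eauto).
    apply testbit_le in Hu. pose proof (Nat.pow_gt_lin_r 2 u). lia.
Qed.

Lemma G_sem S T a b (hab : a <> b) (Ha : Nat.testbit S a = true) (Hb : Nat.testbit S b = true)
  (HaT : T <= 2 ^ a) (HbT : T <= 2 ^ b) (hST : forall m, Nat.testbit S m = true -> m < T) :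
  SemSigma (Gr S) T S.
Proof.
  pose proof (G_rev S T a b hab Ha Hb HaT HbT) as Rev.
  assert (Hroot : forall x : VG S, Phi (Gr S) S x x -> x = vroot S).
  { intros [lx Hx] Hph. destruct lx as [|m lp].
    - apply VG_eq; reflexivity.
    - exfalso. pose proof Hx as Hp. apply valid_cons in Hp. destruct Hp as [_ Hp].
      set (p := exist (fun l => valid S l = true) lp Hp : VG S).
      apply Phi_unfold in Hph. destruct Hph as [A _].
      assert (Hxp : adjG S (exist _ (m :: lp) Hx) p) by (left; exists m; reflexivity).
      assert (Hpx : p <> exist _ (m :: lp) Hx) by (intro E; apply (f_equal (@proj1_sig _ _)) in E; simpl in E; apply (f_equal (@length nat)) in E; simpl in E; lia).
      destruct (A p Hxp Hpx) as [u [Hu Hpu]].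
      pose proof (Rev lp p (exist _ (m :: lp) Hx) m eq_refl eq_refl u Hpu). apply hST in Hu. lia. }
  split; [|split; [|split; [|split]]].
  - exists (vroot S). apply G_Phi_root.
  - intros x y Hx Hy. rewrite (Hroot x Hx), (Hroot y Hy). reflexivity.
  - intros [lx Hx]. destruct lx as [|m lp].
    + left. assert (E : exist (fun l => valid S l = true) [] Hx = vroot S) by (apply VG_eq; reflexivity).
      rewrite E. apply G_Phi_root.
    + right. pose proof Hx as Hp. apply valid_cons in Hp. destruct Hp as [_ Hp].
      exists (exist _ lp Hp). split; [left; exists m; reflexivity|].
      exists m. split; [eapply valid_lt; eauto|]. apply G_Phi_child. reflexivity.
  - intros x p Hxp [t [HtT Ht]] [u [HuT Hu]]. destruct Hxp as [[m E]|[m E]].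
    + pose proof (Rev _ p x m eq_refl E u Hu). lia.
    + pose proof (Rev _ x p m eq_refl E t Ht). lia.
  - intros x y z Hxy Hxz Hyz t HtT Hty Htz.
    destruct Hxy as [[m E]|[u Ey]].
    + pose proof (Rev _ y x m eq_refl E t Hty). lia.
    + destruct Hxz as [[m E]|[w Ez]].
      * pose proof (Rev _ z x m eq_refl E t Htz). lia.
      * pose proof (Phi_uniq _ _ _ _ _ Hty (G_Phi_child S y x u Ey)).
        pose proof (Phi_uniq _ _ _ _ _ Htz (G_Phi_child S z x w Ez)). subst.
        apply Hyz. apply VG_eq. congruence.
Qed.

Definition Typed (T x p : nat) : form := bigOr x (map (fun t => phi (S t) t x p) (seq 0 T)).
Definition rootf (s x : nat) : form := phi (S s) s x x.

Definition SigA s := FEx 0 (rootf s 0).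
Definition SigB s := FAll 0 (FAll 1 (FImp (FAnd (rootf s 0) (rootf s 1)) (FEq 0 1))).
Definition SigC T s := FAll 0 (FOr (rootf s 0) (FEx 1 (FAnd (FAdj 0 1) (Typed T 0 1)))).
Definition SigD T := FAll 0 (FAll 1 (FImp (FAdj 0 1) (FNot (FAnd (Typed T 0 1) (Typed T 1 0))))).
Definition SigE T := FAll 0 (FAll 1 (FAll 2 (FImp (FAnd (FAnd (FAdj 0 1) (FAdj 0 2)) (FNot (FEq 1 2)))
   (bigAnd 0 (map (fun t => FNot (FAnd (phi (S t) t 1 0) (phi (S t) t 2 0))) (seq 0 T)))))).
Definition Sig T s := FAnd (SigA s) (FAnd (SigB s) (FAnd (SigC T s) (FAnd (SigD T) (SigE T)))).

Lemma sat_Typed G e T x p : sat G e (Typed T x p) <-> exists t, t < T /\ Phi G t (e x) (e p).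
Proof.
  unfold Typed. rewrite sat_bigOr. split.
  - intros [f [Hf Hs]]. apply in_map_iff in Hf. destruct Hf as [t [<- Ht]]. apply in_seq in Ht.
    exists t. split; [lia|]. apply phi_sat'; auto.
  - intros [t [Ht Hs]]. exists (phi (S t) t x p). split.
    + apply (in_map (fun t => phi (S t) t x p)). apply in_seq. lia.
    + apply phi_sat'; auto.
Qed.

Lemma sat_root G e s x : sat G e (rootf s x) <-> Phi G s (e x) (e x).
Proof. apply phi_sat'. Qed.

Lemma sat_Sig G e T s : sat G e (Sig T s) <-> SemSigma G T s.
Proof.
  unfold Sig, SemSigma, SigA, SigB, SigC, SigD, SigE. cbn [sat].
  setoid_rewrite sat_root. setoid_rewrite sat_Typed. setoid_rewrite sat_bigAnd.
  unfold upd; cbn [Nat.eqb].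
  split.
  - intros [A [B [C [D E]]]]. split; [exact A|]. split; [|split; [|split]].
    + intros x y Hx Hy. apply (B x y); auto.
    + exact C.
    + intros x p Hxp H1 H2. apply (D x p Hxp); auto.
    + intros x y z Hxy Hxz Hyz t Ht H1 H2.
      apply (E x y z (conj (conj Hxy Hxz) Hyz) (FNot (FAnd (phi (S t) t 1 0) (phi (S t) t 2 0)))).
      * apply (in_map (fun t => FNot (FAnd (phi (S t) t 1 0) (phi (S t) t 2 0)))). apply in_seq. lia.
      * cbn [sat]. rewrite !phi_sat'. unfold upd; cbn [Nat.eqb]. tauto.
  - intros [A [B [C [D E]]]]. split; [exact A|]. split; [|split; [|split]].
    + intros x y [Hx Hy]. auto.
    + exact C.
    + intros x p Hxp [H1 H2]. apply (D x p Hxp); auto.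
    + intros x y z [[Hxy Hxz] Hyz] f Hf. apply in_map_iff in Hf. destruct Hf as [t [<- Ht]].
      apply in_seq in Ht. cbn [sat]. rewrite !phi_sat'. unfold upd; cbn [Nat.eqb].
      intros [H1 H2]. apply (E x y z Hxy Hxz Hyz t); auto. lia.
Qed.

Lemma free_phi v : forall fu n x p, free v (phi fu n x p) -> v = x \/ v = p.
Proof.
  induction fu as [|f IH]; intros n x p; simpl.
  - intros [H|H]; auto.
  - intros [[Hne [[[H|H]|H]|H]]|H].
    + subst. lia.
    + subst. lia.
    + destruct H; subst; auto. lia.
    + apply free_bigOr in H. destruct H as [H|[g [Hg Hf]]]; [lia|].
      apply in_map_iff in Hg. destruct Hg as [m [<- _]]. apply IH in Hf. lia.
    + apply free_bigAnd in H. destruct H as [H|[g [Hg Hf]]]; auto.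
      apply in_map_iff in Hg. destruct Hg as [m [<- _]]. simpl in Hf.
      destruct Hf as [Hne [[[H|H]|H]|H]].
      * lia.
      * lia.
      * destruct H; subst; auto. lia.
      * apply IH in H. lia.
Qed.

Lemma free_Typed v T x p : free v (Typed T x p) -> v = x \/ v = p.
Proof.
  unfold Typed. intros H. apply free_bigOr in H. destruct H as [H|[g [Hg Hf]]]; auto.
  apply in_map_iff in Hg. destruct Hg as [m [<- _]]. apply free_phi in Hf. auto.
Qed.

Ltac crush_free := repeat match goal with
 | H : _ /\ _ |- _ => destruct H
 | H : _ \/ _ |- _ => destruct H
 | H : free _ (rootf _ _) |- _ => apply free_phi in H
 | H : free _ (Typed _ _ _) |- _ => apply free_Typed in H
 | H : free _ (phi _ _ _ _) |- _ => apply free_phi in H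
 | H : free _ (bigAnd _ _) |- _ => apply free_bigAnd in H
 | H : In _ (map _ _) |- _ => let m := fresh "m" in let E := fresh "E" in
        apply in_map_iff in H; destruct H as [m [E _]]; subst
 | H : ex _ |- _ => destruct H
 | H : free _ _ |- _ => progress cbn [free] in H
 end; try lia.

Lemma Sig_sentence T s : sentence (Sig T s).
Proof.
  intros v H. unfold Sig, SigA, SigB, SigC, SigD, SigE in H. crush_free.
Qed.

Lemma qrank_phi : forall fu j n x p, n < tower j -> qrank (phi fu n x p) <= S j.
Proof.
  induction fu as [|f IH]; intros j n x p Hn; cbn [phi qrank]; [lia|].
  assert (HB : forall m, In m (elems n) -> forall y z, qrank (phi f m y z) <= j).
  { intros m Hm y z. apply in_elems in Hm. destruct j as [|j].
    + simpl in Hn. assert (n = 0) by lia. subst. rewrite Nat.bits_0 in Hm. discriminate.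
    + simpl in Hn. pose proof (testbit_small _ _ _ Hn Hm). apply IH. auto. }
  assert (H1 : qrank (bigOr (S (x + p)) (map (fun m => phi f m (S (x + p)) x) (elems n))) <= j).
  { apply qrank_bigOr. intros g Hg. apply in_map_iff in Hg. destruct Hg as [m [<- Hm]]. auto. }
  assert (H2 : qrank (bigAnd x (map (fun m => FEx (S (x + p)) (FAnd (FAnd (FAdj x (S (x + p))) (FNot (FEq (S (x + p)) p))) (phi f m (S (x + p)) x))) (elems n))) <= S j).
  { apply qrank_bigAnd. intros g Hg. apply in_map_iff in Hg. destruct Hg as [m [<- Hm]].
    cbn [qrank]. specialize (HB m Hm (S (x+p)) x). lia. }
  lia.
Qed.

Lemma qrank_Sig j s : s < tower (S j) -> qrank (Sig (tower j) s) <= j + 4.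
Proof.
  intros HS.
  assert (Hr : forall x, qrank (rootf s x) <= S (S j)) by (intros; apply qrank_phi; auto).
  assert (Ht : forall x p, qrank (Typed (tower j) x p) <= S j).
  { intros. apply qrank_bigOr. intros g Hg. apply in_map_iff in Hg. destruct Hg as [t [<- Ht]].
    apply in_seq in Ht. apply qrank_phi. lia. }
  unfold Sig, SigA, SigB, SigC, SigD, SigE. cbn [qrank].
  pose proof (Hr 0). pose proof (Hr 1). pose proof (Ht 0 1). pose proof (Ht 1 0).
  assert (qrank (bigAnd 0 (map (fun t => FNot (FAnd (phi (S t) t 1 0) (phi (S t) t 2 0))) (seq 0 (tower j)))) <= S j).
  { apply qrank_bigAnd. intros g Hg. apply in_map_iff in Hg. destruct Hg as [t [<- Ht']].
    apply in_seq in Ht'. cbn [qrank]. apply Nat.max_lub; apply qrank_phi; lia. }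
  lia.
Qed.

Lemma sat_iso G H (f : V G -> V H) (g : V H -> V G)
  (gf : forall x, g (f x) = x) (fg : forall y, f (g y) = y)
  (Hadj : forall x y, adj G x y <-> adj H (f x) (f y)) :
  forall ff e, sat G e ff <-> sat H (fun v => f (e v)) ff.
Proof.
  assert (Hupd : forall e x v, (fun w => f (upd e x v w)) = upd (fun w => f (e w)) x (f v)).
  { intros e x v. apply functional_extensionality. intro w. unfold upd. destruct (w =? x); auto. }
  induction ff as [x y|x y|p IH|p IH q IH2|p IH q IH2|p IH q IH2|p IH q IH2|x p IH|x p IH]; intros e; simpl.
  - apply Hadj.
  - split; [intros ->; auto| intros E; rewrite <- (gf (e x)), <- (gf (e y)), E; auto].
  - rewrite IH. tauto.
  - rewrite IH, IH2. tauto.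
  - rewrite IH, IH2. tauto.
  - rewrite IH, IH2. tauto.
  - rewrite IH, IH2. tauto.
  - split.
    + intros [v Hv]. exists (f v). rewrite <- Hupd. apply IH. auto.
    + intros [w Hw]. exists (g w). apply IH. rewrite Hupd, fg. auto.
  - split.
    + intros Hv w. specialize (Hv (g w)). apply IH in Hv. rewrite Hupd, fg in Hv. auto.
    + intros Hw v. apply IH. rewrite Hupd. auto.
Qed.

Lemma models_iso G H phi : iso G H -> models G phi -> models H phi.
Proof.
  intros [f [g [gf [fg Hadj]]]] HG e.
  assert (E : (fun v => f (g (e v))) = e) by (apply functional_extensionality; intro; apply fg).
  rewrite <- E. apply (sat_iso G H f g gf fg Hadj). apply HG.
Qed.

Lemma iso_sym G H : iso G H -> iso H G.
Proof.
  intros [f [g [gf [fg Hadj]]]]. exists g, f. split; auto. split; auto.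
  intros x y. rewrite Hadj, !fg. tauto.
Qed.

Lemma models_Sig H T s : models H (Sig T s) <-> SemSigma H T s.
Proof.
  split.
  - intros Hm. destruct (V_inhabited H) as [v0]. apply (sat_Sig H (fun _ => v0)). apply Hm.
  - intros HS e. apply sat_Sig. auto.
Qed.

Definition Good (j s : nat) : Prop :=
  2 <= j /\ s < 2 ^ tower j /\ Nat.testbit s (tower j - 1) = true /\ Nat.testbit s (tower j - 2) = true.

Lemma tower_ge j : j <= tower j.
Proof.
  induction j; simpl; [lia|]. pose proof (Nat.pow_gt_lin_r 2 (tower j)). lia.
Qed.

Lemma tower_ge4 j : 2 <= j -> 4 <= tower j.
Proof.
  intros Hj. destruct j as [|[|j]]; [lia|lia|]. simpl.
  assert (1 <= tower j).
  { destruct j; simpl; [lia|]. pose proof (Nat.pow_gt_lin_r 2 (tower j)). lia. }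
  assert (2 <= 2 ^ tower j) by (change 2 with (2^1) at 1; apply Nat.pow_le_mono_r; lia).
  change 4 with (2^2). apply Nat.pow_le_mono_r; lia.
Qed.

Lemma pow_ge_lin4 n : 4 <= n -> n <= 2 ^ (n - 2).
Proof.
  intros Hn. induction n as [|n IH]; [lia|].
  destruct (Nat.eq_dec n 3) as [->|Hne]; [simpl; lia|].
  assert (4 <= n) by lia. specialize (IH H).
  replace (S n - 2) with (S (n - 2)) by lia. rewrite Nat.pow_succ_r'. lia.
Qed.

Lemma Good_props j s : Good j s ->
  (forall m, Nat.testbit s m = true -> m < tower j) /\
  tower j - 1 <> tower j - 2 /\ tower j <= 2 ^ (tower j - 1) /\ tower j <= 2 ^ (tower j - 2).
Proof.
  intros [Hj [Hs [Ha Hb]]]. pose proof (tower_ge4 j Hj).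
  pose proof (pow_ge_lin4 _ H).
  split; [intros m Hm; eapply testbit_small; eauto|].
  split; [lia|]. split; auto.
  eapply Nat.le_trans; [exact H0|]. apply Nat.pow_le_mono_r; lia.
Qed.

Lemma Good_sem j s : Good j s -> SemSigma (Gr s) (tower j) s.
Proof.
  intros HG. pose proof HG as [_ [_ [Ha Hb]]]. destruct (Good_props j s HG) as [hST [hab [HaT HbT]]].
  eapply G_sem; eauto.
Qed.

Lemma Sig_defines j s : Good j s -> defines (Sig (tower j) s) (Gr s).
Proof.
  intros HG. destruct (Good_props j s HG) as [hST _].
  split; [apply Sig_sentence|]. split.
  - apply models_Sig. apply Good_sem; auto.
  - intros H Hni Hm. apply Hni. apply models_Sig in Hm. eapply model_iso; eauto.
Qed.

Lemma G_root_small j s n : Good j s -> (forall u, Nat.testbit n u = true -> u < tower j) ->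
  forall x : VG s, Phi (Gr s) n x x -> x = vroot s.
Proof.
  intros HG hn. pose proof HG as [_ [_ [Ha Hb]]]. destruct (Good_props j s HG) as [hST [hab [HaT HbT]]].
  pose proof (G_rev s (tower j) _ _ hab Ha Hb HaT HbT) as Rev.
  intros [lx Hx] Hph. destruct lx as [|m lp].
  - apply VG_eq; reflexivity.
  - exfalso. pose proof Hx as Hp. apply valid_cons in Hp. destruct Hp as [_ Hp].
    set (p := exist (fun l => valid s l = true) lp Hp : VG s).
    apply Phi_unfold in Hph. destruct Hph as [A _].
    assert (Hxp : adjG s (exist _ (m :: lp) Hx) p) by (left; exists m; reflexivity).
    assert (Hpx : p <> exist _ (m :: lp) Hx) by (intro E; apply (f_equal (@proj1_sig _ _)) in E; simpl in E; apply (f_equal (@length nat)) in E; simpl in E; lia).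
    destruct (A p Hxp Hpx) as [u [Hu Hpu]].
    pose proof (Rev lp p (exist _ (m :: lp) Hx) m eq_refl eq_refl u Hpu). apply hn in Hu. lia.
Qed.

Lemma tower_mono a b : a <= b -> tower a <= tower b.
Proof.
  induction 1; auto. simpl. pose proof (Nat.pow_gt_lin_r 2 (tower m)). lia.
Qed.

Lemma tower_lt a b : a < b -> tower a < tower b.
Proof.
  intros H. apply Nat.lt_le_trans with (tower (S a)).
  - simpl. apply Nat.pow_gt_lin_r; lia.
  - apply tower_mono; lia.
Qed.

Lemma non_iso_aux j1 s1 j2 s2 : Good j1 s1 -> Good j2 s2 -> j1 <= j2 -> iso (Gr s1) (Gr s2) -> s1 = s2.
Proof.
  intros G1 G2 Hj Hiso.
  pose proof (models_iso _ _ _ Hiso (proj1 (proj2 (Sig_defines j1 s1 G1)))) as Hm.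
  apply models_Sig in Hm. destruct Hm as [[x Hx] _].
  destruct (Good_props j1 s1 G1) as [h1 _].
  assert (x = vroot s2).
  { apply (G_root_small j2 s2 s1 G2); auto. intros u Hu. apply h1 in Hu.
    pose proof (tower_mono _ _ Hj). lia. }
  subst x. exact (Phi_uniq _ _ _ _ _ Hx (G_Phi_root s2)).
Qed.

Lemma Good_level j1 j2 s : Good j1 s -> Good j2 s -> j1 = j2.
Proof.
  intros G1 G2. destruct (Good_props j1 s G1) as [h1 _]. destruct (Good_props j2 s G2) as [h2 _].
  destruct G1 as [_ [_ [A1 _]]]. destruct G2 as [_ [_ [A2 _]]].
  apply h1 in A2. apply h2 in A1.
  destruct (Nat.lt_trichotomy j1 j2) as [H|[H|H]]; auto; apply tower_lt in H; lia.
Qed.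

Lemma non_iso j1 s1 j2 s2 : Good j1 s1 -> Good j2 s2 -> iso (Gr s1) (Gr s2) -> j1 = j2 /\ s1 = s2.
Proof.
  intros G1 G2 Hiso.
  assert (s1 = s2).
  { destruct (le_ge_dec j1 j2).
    - eapply non_iso_aux; eauto.
    - symmetry. eapply non_iso_aux; eauto. apply iso_sym; auto. }
  subst. split; auto. eapply Good_level; eauto.
Qed.

Fixpoint vars (f : form) : list nat :=
  match f with
  | FAdj x y | FEq x y => [x; y]
  | FNot g => vars g
  | FAnd g h | FOr g h | FImp g h | FIff g h => vars g ++ vars h
  | FEx x g | FAll x g => x :: vars g
  end.

Fixpoint rename (r : nat -> nat) (f : form) : form :=
  match f with
  | FAdj x y => FAdj (r x) (r y)
  | FEq x y => FEq (r x) (r y)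
  | FNot g => FNot (rename r g)
  | FAnd g h => FAnd (rename r g) (rename r h)
  | FOr g h => FOr (rename r g) (rename r h)
  | FImp g h => FImp (rename r g) (rename r h)
  | FIff g h => FIff (rename r g) (rename r h)
  | FEx x g => FEx (r x) (rename r g)
  | FAll x g => FAll (r x) (rename r g)
  end.

Lemma flength_rename r f : flength (rename r f) = flength f.
Proof. induction f; simpl; auto. Qed.

Lemma vars_length f : length (vars f) <= flength f.
Proof. induction f; simpl; try rewrite length_app; lia. Qed.

Lemma sat_rename G r : forall f e e',
  (forall v, In v (vars f) -> e v = e' (r v)) ->
  (forall v w, In v (vars f) -> In w (vars f) -> r v = r w -> v = w) ->
  (sat G e f <-> sat G e' (rename r f)).
Proof.
  induction f as [x y|x y|p IH|p IH q IH2|p IH q IH2|p IH q IH2|p IH q IH2|x p IH|x p IH];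
    intros e e' He Hi; simpl in *.
  - rewrite (He x), (He y); auto. tauto.
  - rewrite (He x), (He y); auto. tauto.
  - rewrite (IH e e'); auto. tauto.
  - rewrite (IH e e'), (IH2 e e'); try tauto; intros; apply He || apply Hi; auto using in_or_app.
  - rewrite (IH e e'), (IH2 e e'); try tauto; intros; apply He || apply Hi; auto using in_or_app.
  - rewrite (IH e e'), (IH2 e e'); try tauto; intros; apply He || apply Hi; auto using in_or_app.
  - rewrite (IH e e'), (IH2 e e'); try tauto; intros; apply He || apply Hi; auto using in_or_app.
  - assert (Hs : forall v, sat G (upd e x v) p <-> sat G (upd e' (r x) v) (rename r p)).
    { intro v. apply IH; [|intros; apply Hi; auto].
      intros w Hw. unfold upd. destruct (Nat.eqb_spec w x).
      - subst. rewrite Nat.eqb_refl. auto.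
      - destruct (Nat.eqb_spec (r w) (r x)).
        + exfalso. apply n. apply Hi; auto.
        + apply He; auto. }
    setoid_rewrite Hs. tauto.
  - assert (Hs : forall v, sat G (upd e x v) p <-> sat G (upd e' (r x) v) (rename r p)).
    { intro v. apply IH; [|intros; apply Hi; auto].
      intros w Hw. unfold upd. destruct (Nat.eqb_spec w x).
      - subst. rewrite Nat.eqb_refl. auto.
      - destruct (Nat.eqb_spec (r w) (r x)).
        + exfalso. apply n. apply Hi; auto.
        + apply He; auto. }
    setoid_rewrite Hs. tauto.
Qed.

Fixpoint idx (v : nat) (l : list nat) : nat :=
  match l with [] => 0 | a :: r => if Nat.eqb a v then 0 else S (idx v r) end.

Lemma idx_lt v l : In v l -> idx v l < length l.
Proof.
  induction l as [|a l IH]; simpl; [tauto|]. intros [->|H].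
  - rewrite Nat.eqb_refl. lia.
  - destruct (Nat.eqb a v); [lia|]. specialize (IH H). lia.
Qed.

Lemma nth_idx v l : In v l -> nth (idx v l) l 0 = v.
Proof.
  induction l as [|a l IH]; simpl; [tauto|]. intros H.
  destruct (Nat.eqb_spec a v); auto. destruct H; [congruence|]. auto.
Qed.

Lemma idx_inj v w l : In v l -> In w l -> idx v l = idx w l -> v = w.
Proof.
  intros Hv Hw E. rewrite <- (nth_idx v l Hv), <- (nth_idx w l Hw), E. auto.
Qed.

Definition norm (f : form) : form := rename (fun v => idx v (nodup Nat.eq_dec (vars f))) f.

Lemma flength_norm f : flength (norm f) = flength f.
Proof. apply flength_rename. Qed.

Lemma models_norm G f : models G f <-> models G (norm f).
Proof.
  set (vs := nodup Nat.eq_dec (vars f)).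
  assert (Hin : forall v, In v (vars f) -> In v vs) by (intros; apply nodup_In; auto).
  assert (Hi : forall v w, In v (vars f) -> In w (vars f) -> idx v vs = idx w vs -> v = w).
  { intros v w Hv Hw. apply idx_inj; auto. }
  unfold norm. fold vs. split.
  - intros Hm e'. apply (proj1 (sat_rename G (fun v => idx v vs) f (fun v => e' (idx v vs)) e' (fun v _ => eq_refl) Hi)). apply Hm.
  - intros Hm e.
    assert (He : forall v, In v (vars f) -> e v = e (nth (idx v vs) vs 0)) by (intros v Hv; rewrite nth_idx; auto).
    apply (proj2 (sat_rename G (fun v => idx v vs) f e (fun y => e (nth y vs 0)) He Hi)). apply Hm.
Qed.

Fixpoint allvars_lt (L : nat) (f : form) : Prop :=
  match f with
  | FAdj x y | FEq x y => x < L /\ y < L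
  | FNot g => allvars_lt L g
  | FAnd g h | FOr g h | FImp g h | FIff g h => allvars_lt L g /\ allvars_lt L h
  | FEx x g | FAll x g => x < L /\ allvars_lt L g
  end.

Lemma allvars_rename r L f : (forall v, In v (vars f) -> r v < L) -> allvars_lt L (rename r f).
Proof.
  induction f; simpl; intros H; repeat split; auto using in_or_app.
Qed.

Lemma norm_vars f : allvars_lt (flength f) (norm f).
Proof.
  unfold norm. apply allvars_rename. intros v Hv.
  assert (H1 : idx v (nodup Nat.eq_dec (vars f)) < length (nodup Nat.eq_dec (vars f)))
    by (apply idx_lt; apply nodup_In; auto).
  assert (H2 : length (nodup Nat.eq_dec (vars f)) <= length (vars f)).
  { apply NoDup_incl_length; [apply NoDup_nodup|]. intros x Hx. apply nodup_In in Hx. exact Hx. }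
  pose proof (vars_length f). lia.
Qed.

Fixpoint enc (f : form) : nat :=
  match f with
  | FAdj x y => 9 * to_nat (x, y)
  | FEq x y => 9 * to_nat (x, y) + 1
  | FNot g => 9 * enc g + 2
  | FAnd g h => 9 * to_nat (enc g, enc h) + 3
  | FOr g h => 9 * to_nat (enc g, enc h) + 4
  | FImp g h => 9 * to_nat (enc g, enc h) + 5
  | FIff g h => 9 * to_nat (enc g, enc h) + 6
  | FEx x g => 9 * to_nat (x, enc g) + 7
  | FAll x g => 9 * to_nat (x, enc g) + 8
  end.

Lemma enc_inj : forall f1 f2, enc f1 = enc f2 -> f1 = f2.
Proof.
  induction f1 as [x y|x y|p IH|p IH q IH2|p IH q IH2|p IH q IH2|p IH q IH2|x p IH|x p IH];
    intros [x' y'|x' y'|p'|p' q'|p' q'|p' q'|p' q'|x' p'|x' p'] E; cbn [enc] in E; try lia;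
  repeat match goal with
  | E : 9 * ?a + ?i = 9 * ?b + ?i |- _ => assert (a = b) by lia; clear E
  | E : 9 * ?a = 9 * ?b |- _ => assert (a = b) by lia; clear E
  | E : to_nat _ = to_nat _ |- _ => apply to_nat_inj in E; injection E as ? ?
  end; subst; try f_equal; auto.
Qed.

Fixpoint Bd (L n : nat) : nat :=
  match n with
  | 0 => 9 * (2 * L + 1) ^ 2 + 9
  | S n => 9 * (2 * Bd L n + L + 1) ^ 2 + 9
  end.

Lemma Bd_step L n : Bd L n <= Bd L (S n).
Proof. simpl. nia. Qed.

Lemma Bd_mono L n m : n <= m -> Bd L n <= Bd L m.
Proof. induction 1; auto. pose proof (Bd_step L m). lia. Qed.

Lemma to_nat_bound x y : to_nat (x, y) <= (x + y + 1) ^ 2.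
Proof. pose proof (to_nat_spec x y). rewrite Nat.pow_2_r. remember (to_nat (x, y)) as t. nia. Qed.

Lemma sq_mono a b : a <= b -> a ^ 2 <= b ^ 2.
Proof. intros; apply Nat.pow_le_mono_l; auto. Qed.

Lemma enc_bound L : forall f, allvars_lt L f -> enc f < Bd L (flength f).
Proof.
  assert (Hbin : forall a b n, a < Bd L n -> b < Bd L n -> 9 * to_nat (a, b) + 8 < Bd L (S n)).
  { intros a b n Ha Hb. pose proof (to_nat_bound a b).
    pose proof (sq_mono (a + b + 1) (2 * Bd L n + L + 1) ltac:(lia)). cbn [Bd]. lia. }
  assert (Hq : forall x b n, x < L -> b < Bd L n -> 9 * to_nat (x, b) + 8 < Bd L (S n)).
  { intros a b n Ha Hb. pose proof (to_nat_bound a b).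
    pose proof (sq_mono (a + b + 1) (2 * Bd L n + L + 1) ltac:(lia)). cbn [Bd]. lia. }
  assert (Hat : forall x y, x < L -> y < L -> 9 * to_nat (x, y) + 8 < Bd L 3).
  { intros x y Hx Hy. pose proof (to_nat_bound x y). pose proof (sq_mono (x+y+1) (2*L+1) ltac:(lia)).
    pose proof (Bd_mono L 0 3 ltac:(lia)). assert (Bd L 0 = 9 * (2 * L + 1) ^ 2 + 9) by reflexivity. lia. }
  induction f as [x y|x y|p IH|p IH q IH2|p IH q IH2|p IH q IH2|p IH q IH2|x p IH|x p IH];
    cbn [enc flength allvars_lt]; intros HL.
  - specialize (Hat x y (proj1 HL) (proj2 HL)). lia.
  - specialize (Hat x y (proj1 HL) (proj2 HL)). lia.
  - specialize (IH HL). change (1 + flength p) with (S (flength p)). cbn [Bd]. pose proof (sq_mono (Bd L (flength p)) (2 * Bd L (flength p) + L + 1) ltac:(lia)).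
    remember (Bd L (flength p)) as B. assert (B <= B ^ 2) by (rewrite Nat.pow_2_r; destruct B; simpl; lia). lia.
  - destruct HL as [H1 H2]. specialize (IH H1). specialize (IH2 H2).
    pose proof (Bd_mono L (flength p) (2 + flength p + flength q) ltac:(lia)).
    pose proof (Bd_mono L (flength q) (2 + flength p + flength q) ltac:(lia)).
    pose proof (Hbin (enc p) (enc q) (2 + flength p + flength q) ltac:(lia) ltac:(lia)).
    replace (3 + flength p + flength q) with (S (2 + flength p + flength q)) by lia. lia.
  - destruct HL as [H1 H2]. specialize (IH H1). specialize (IH2 H2).
    pose proof (Bd_mono L (flength p) (2 + flength p + flength q) ltac:(lia)).
    pose proof (Bd_mono L (flength q) (2 + flength p + flength q) ltac:(lia)).
    pose proof (Hbin (enc p) (enc q) (2 + flength p + flength q) ltac:(lia) ltac:(lia)).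
    replace (3 + flength p + flength q) with (S (2 + flength p + flength q)) by lia. lia.
  - destruct HL as [H1 H2]. specialize (IH H1). specialize (IH2 H2).
    pose proof (Bd_mono L (flength p) (2 + flength p + flength q) ltac:(lia)).
    pose proof (Bd_mono L (flength q) (2 + flength p + flength q) ltac:(lia)).
    pose proof (Hbin (enc p) (enc q) (2 + flength p + flength q) ltac:(lia) ltac:(lia)).
    replace (3 + flength p + flength q) with (S (2 + flength p + flength q)) by lia. lia.
  - destruct HL as [H1 H2]. specialize (IH H1). specialize (IH2 H2).
    pose proof (Bd_mono L (flength p) (2 + flength p + flength q) ltac:(lia)).
    pose proof (Bd_mono L (flength q) (2 + flength p + flength q) ltac:(lia)).
    pose proof (Hbin (enc p) (enc q) (2 + flength p + flength q) ltac:(lia) ltac:(lia)).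
    replace (3 + flength p + flength q) with (S (2 + flength p + flength q)) by lia. lia.
  - destruct HL as [H1 H2]. specialize (IH H2).
    pose proof (Bd_mono L (flength p) (S (flength p)) ltac:(lia)).
    pose proof (Hq x (enc p) (S (flength p)) H1 ltac:(lia)).
    replace (2 + flength p) with (S (S (flength p))) by lia. lia.
  - destruct HL as [H1 H2]. specialize (IH H2).
    pose proof (Bd_mono L (flength p) (S (flength p)) ltac:(lia)).
    pose proof (Hq x (enc p) (S (flength p)) H1 ltac:(lia)).
    replace (2 + flength p) with (S (S (flength p))) by lia. lia.
Qed.

Lemma pigeon n m (h : nat -> nat) : (forall i, i < n -> h i < m) ->
  (forall i i', i < n -> i' < n -> h i = h i' -> i = i') -> n <= m.
Proof.
  intros Hb Hi.
  assert (HN : NoDup (map h (seq 0 n))).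
  { apply NoDup_map_NoDup_ForallPairs; [|apply seq_NoDup].
    intros a b Ha Hb' E. apply in_seq in Ha, Hb'. apply Hi; auto; lia. }
  assert (Hinc : incl (map h (seq 0 n)) (seq 0 m)).
  { intros y Hy. apply in_map_iff in Hy. destruct Hy as [i [<- Hin]]. apply in_seq in Hin.
    apply in_seq. specialize (Hb i ltac:(lia)). lia. }
  pose proof (NoDup_incl_length HN Hinc). rewrite length_map, !length_seq in H. auto.
Qed.

Lemma lin_pow6 n : 6 <= n -> 2 * n + 16 <= 2 ^ n.
Proof.
  induction n as [|n IH]; intros Hn; [lia|].
  destruct (Nat.eq_dec n 5) as [->|Hne]; [simpl; lia|].
  rewrite Nat.pow_succ_r'. specialize (IH ltac:(lia)). lia.
Qed.

Lemma lin_pow3 n : 3 <= n -> 2 * n + 1 <= 2 ^ n.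
Proof.
  induction n as [|n IH]; intros Hn; [lia|].
  destruct (Nat.eq_dec n 2) as [->|Hne]; [simpl; lia|].
  rewrite Nat.pow_succ_r'. specialize (IH ltac:(lia)). lia.
Qed.

Lemma lin_pow0 n : 2 * n + 1 <= 2 ^ (n + 1).
Proof.
  induction n as [|n IH]; [simpl; lia|].
  replace (S n + 1) with (S (n + 1)) by lia. rewrite Nat.pow_succ_r'.
  assert (2 <= 2 ^ (n + 1)) by (change 2 with (2^1) at 1; apply Nat.pow_le_mono_r; lia). lia.
Qed.

Fixpoint ee (L n : nat) : nat :=
  match n with 0 => 2 * L + 7 | S n => 2 * ee L n + 9 end.

Lemma ee_closed L n : ee L n + 9 = (2 * L + 16) * 2 ^ n.
Proof. induction n; simpl; lia. Qed.

Lemma pow_pos' e : 1 <= 2 ^ e.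
Proof. pose proof (Nat.pow_gt_lin_r 2 e). lia. Qed.

Lemma Bd_le L : forall n, Bd L n <= 2 ^ (ee L n) /\ L + 1 <= 2 ^ (ee L n).
Proof.
  induction n as [|n [IH1 IH2]].
  - cbn [Bd ee]. pose proof (lin_pow0 L).
    pose proof (sq_mono _ _ H). rewrite <- Nat.pow_mul_r in H0.
    replace (2 * L + 7) with ((L + 1) * 2 + 5) by lia. rewrite Nat.pow_add_r.
    replace (2 ^ 5) with 32 by reflexivity. pose proof (pow_pos' ((L+1) * 2)). split; [lia|].
    assert (2 ^ (L + 1) <= 2 ^ ((L + 1) * 2)) by (apply Nat.pow_le_mono_r; lia). lia.
  - cbn [Bd ee]. remember (ee L n) as e. remember (2 ^ e) as P.
    assert (E : 2 ^ (2 * e + 9) = P * P * 512).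
    { replace (2 * e + 9) with (e + e + 9) by lia. rewrite !Nat.pow_add_r. subst P. reflexivity. }
    rewrite E. assert (1 <= P) by (subst; apply pow_pos').
    pose proof (sq_mono (2 * Bd L n + L + 1) (4 * P) ltac:(lia)). rewrite Nat.pow_2_r in H0 |- *.
    split; nia.
Qed.

Lemma final_ineq L : 16 <= L -> Bd L L < 2 ^ (2 ^ (2 ^ L) - 2).
Proof.
  intros HL. destruct (Bd_le L L) as [H1 _].
  pose proof (ee_closed L L). pose proof (lin_pow6 L ltac:(lia)).
  assert (H2 : ee L L <= 2 ^ L * 2 ^ L) by nia.
  rewrite <- Nat.pow_add_r in H2.
  pose proof (lin_pow3 L ltac:(lia)).
  assert (H5 : 2 ^ (L + L) * 2 <= 2 ^ (2 ^ L)).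
  { rewrite Nat.mul_comm, <- Nat.pow_succ_r'. apply Nat.pow_le_mono_r; lia. }
  assert (H6 : 4 <= 2 ^ (L + L)) by (change 4 with (2^2); apply Nat.pow_le_mono_r; lia).
  eapply Nat.le_lt_trans; [exact H1|]. apply Nat.pow_lt_mono_r; lia.
Qed.

Fixpoint lists (B n : nat) : list (list nat) :=
  match n with
  | 0 => [[]]
  | S n => [] :: flat_map (fun l => map (fun m => m :: l) (seq 0 B)) (lists B n)
  end.

Lemma in_lists B : forall n l, length l <= n -> Forall (fun m => m < B) l -> In l (lists B n).
Proof.
  induction n as [|n IH]; intros l Hl HF.
  - destruct l; simpl in *; [auto|lia].
  - destruct l as [|m l]; simpl; [auto|]. right. apply in_flat_map.
    inversion HF; subst. exists l. split; [apply IH; simpl in Hl; auto; lia|].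
    apply (in_map (fun m0 => m0 :: l)). apply in_seq. lia.
Qed.

Lemma valid_bounds s : forall l, valid s l = true -> length l + top s l <= s /\ Forall (fun m => m < s) l.
Proof.
  induction l as [|m l IH]; intros Hv; simpl; [split; auto|].
  apply valid_cons in Hv. destruct Hv as [Hb Hv]. destruct (IH Hv) as [H1 H2].
  apply testbit_lt in Hb. split; [lia|]. constructor; auto. lia.
Qed.

Definition tosig s (l : list nat) : list (VG s) :=
  match Bool.bool_dec (valid s l) true with left H => [exist _ l H] | right _ => [] end.

Lemma Gr_finite s : finite_graph (Gr s).
Proof.
  exists (flat_map (tosig s) (lists s s)). intros [l Hl].
  apply in_flat_map. exists l. split.
  - destruct (valid_bounds s l Hl). apply in_lists; auto. lia.
  - unfold tosig. destruct (Bool.bool_dec (valid s l) true) as [H|H]; [|congruence].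
    left. apply VG_eq. reflexivity.
Qed.

Definition sfam j i := i + 2 ^ (tower j - 1) + 2 ^ (tower j - 2).

Lemma sfam_good j i : 2 <= j -> i < 2 ^ (tower j - 2) -> Good j (sfam j i).
Proof.
  intros Hj Hi. pose proof (tower_ge4 j Hj). unfold sfam.
  set (X := 2 ^ (tower j - 2)) in *.
  assert (E1 : 2 ^ (tower j - 1) = 2 * X).
  { unfold X. rewrite <- Nat.pow_succ_r'. f_equal. lia. }
  assert (E2 : 2 ^ tower j = 4 * X).
  { unfold X. change 4 with (2^2). rewrite <- Nat.pow_add_r. f_equal. lia. }
  rewrite E1. split; [auto|]. split; [rewrite E2; lia|]. split.
  - apply Nat.testbit_true. rewrite E1.
    assert (D : (i + 2 * X + X) / (2 * X) = 1) by (symmetry; apply Nat.div_unique with (X + i); lia).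
    rewrite D. reflexivity.
  - apply Nat.testbit_true. fold X.
    assert (D : (i + 2 * X + X) / X = 3) by (symmetry; apply Nat.div_unique with i; lia).
    rewrite D. reflexivity.
Qed.

Lemma allvars_mono L L' f : L <= L' -> allvars_lt L f -> allvars_lt L' f.
Proof. induction f; simpl; intuition lia. Qed.

Lemma exists_hard j : 5 <= j -> exists s, Good j s /\ forall f, defines f (Gr s) -> tower (j - 2) <= flength f.
Proof.
  intros Hj. apply NNPP. intro Hn.
  set (L := tower (j - 2)). set (T := tower j).
  assert (HT : T = 2 ^ (2 ^ L)).
  { unfold T, L. destruct j as [|[|j']]; [lia|lia|]. simpl. rewrite Nat.sub_0_r. reflexivity. }
  assert (HL : 16 <= L).
  { unfold L. change 16 with (tower 3). apply tower_mono. lia. }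
  assert (Hshort : forall i, i < 2 ^ (T - 2) -> exists f, defines f (Gr (sfam j i)) /\ flength f < L).
  { intros i Hi. apply NNPP. intro Hno. apply Hn. exists (sfam j i). split; [apply sfam_good; [lia| unfold T in Hi; exact Hi]|].
    intros f Hf. destruct (Nat.lt_ge_cases (flength f) L); auto. exfalso. apply Hno. eauto. }
  set (P := fun i f => defines f (Gr (sfam j i)) /\ flength f < L).
  set (fi := fun i => epsilon (inhabits (FEq 0 0)) (P i)).
  assert (Hfi : forall i, i < 2 ^ (T - 2) -> P i (fi i)).
  { intros i Hi. apply (epsilon_spec (inhabits (FEq 0 0)) (P i)). apply Hshort; auto. }
  set (h := fun i => enc (norm (fi i))).
  assert (Hle : 2 ^ (T - 2) <= Bd L L).
  { apply (pigeon _ _ h).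
    - intros i Hi. destruct (Hfi i Hi) as [_ Hlen]. unfold h. unfold P in Hlen. simpl in Hlen.
      eapply Nat.lt_le_trans; [apply (enc_bound L)|].
      + apply allvars_mono with (flength (fi i)); [lia|]. apply norm_vars.
      + apply Bd_mono. rewrite flength_norm. lia.
    - intros i i' Hi Hi' E. unfold h in E. apply enc_inj in E.
      destruct (Hfi i Hi) as [Hd _]. destruct (Hfi i' Hi') as [Hd' _].
      assert (Hm : models (Gr (sfam j i')) (fi i)).
      { apply (proj2 (models_norm _ (fi i))). rewrite E. apply (proj1 (models_norm _ (fi i'))). apply Hd'. }
      destruct Hd as [_ [_ Hd]].
      assert (Hiso : iso (Gr (sfam j i')) (Gr (sfam j i))).
      { apply NNPP. intro Hni. apply (Hd _ Hni Hm). }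
      assert (G1 : Good j (sfam j i')) by (apply sfam_good; [lia| unfold T in *; auto]).
      assert (G2 : Good j (sfam j i)) by (apply sfam_good; [lia| unfold T in *; auto]).
      destruct (non_iso _ _ _ _ G1 G2 Hiso) as [_ Es].
      unfold sfam in Es. lia. }
  pose proof (final_ineq L HL). rewrite <- HT in H. lia.
Qed.

Lemma min_exists (P : nat -> Prop) : (exists n, P n) -> exists n, P n /\ forall m, P m -> n <= m.
Proof.
  intros [n Hn]. induction n as [n IH] using (well_founded_induction lt_wf).
  destruct (classic (exists m, m < n /\ P m)) as [[m [Hm Pm]]|Hno].
  - apply (IH m Hm Pm).
  - exists n. split; auto. intros m Pm. destruct (Nat.lt_ge_cases m n); auto.
    exfalso. apply Hno. eauto.
Qed.

Definition sel (j : nat) : nat :=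
  epsilon (inhabits 0) (fun s => Good j s /\ forall f, defines f (Gr s) -> tower (j - 2) <= flength f).

Lemma sel_spec j : 5 <= j -> Good j (sel j) /\ forall f, defines f (Gr (sel j)) -> tower (j - 2) <= flength f.
Proof.
  intros Hj. apply (epsilon_spec (inhabits 0) (fun s => Good j s /\ forall f, defines f (Gr s) -> tower (j - 2) <= flength f)).
  apply exists_hard; auto.
Qed.

Theorem theorem10p3 :
  exists C : nat, exists Gs : nat -> graph,
    (forall i, finite_graph (Gs i)) /\
    (forall i j, i <> j -> ~ iso (Gs i) (Gs j)) /\
    (forall i, exists d, is_D (Gs i) d /\
       forall f, defines f (Gs i) -> tower (d - 6) <= flength f + C).
Proof.
  exists 0, (fun i => Gr (sel (i + 5))). split; [|split].
  - intros i. apply Gr_finite.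
  - intros i i' Hne Hiso.
    destruct (sel_spec (i + 5) ltac:(lia)) as [G1 _]. destruct (sel_spec (i' + 5) ltac:(lia)) as [G2 _].
    destruct (non_iso _ _ _ _ G1 G2 Hiso) as [E _]. lia.
  - intros i. set (j := i + 5). destruct (sel_spec j ltac:(unfold j; lia)) as [HG Hhard].
    set (s := sel j) in *.
    destruct (min_exists (fun n => exists f, defines f (Gr s) /\ qrank f = n)) as [d [[f0 [Hf0 Hq0]] Hmin]].
    { exists (qrank (Sig (tower j) s)). exists (Sig (tower j) s). split; auto. apply (Sig_defines j s HG). }
    exists d. split.
    + split; [eauto|]. intros f Hf. apply Hmin. eauto.
    + intros f Hf.
      assert (Hd : d <= j + 4).
      { eapply Nat.le_trans; [apply Hmin; exists (Sig (tower j) s); split; [apply (Sig_defines j s HG)|reflexivity]|].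
        apply qrank_Sig. destruct HG as [_ [Hs _]]. simpl. auto. }
      pose proof (Hhard f Hf). pose proof (tower_mono (d - 6) (j - 2) ltac:(lia)). lia.
Qed.
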